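(* A $5 \times 5$ real matrix is panstochastic if and only if it is a convex combination of panstochastic permutation matrices.
   Context: An $n \times n$ matrix with nonnegative real entries is doubly stochastic if the sum of the entries along any of its rows or columns is equal to $1$. A doubly stochastic matrix is panstochastic if the sum of the entries along any downward diagonal or upward diagonal, either broken or unbroken, is equal to $1$ (indexing rows and columns by $\{0,1,\dots,n-1\}$, the $k$th upward diagonal consists of the entries $(i,j)$ with $i+j \equiv k \pmod n$, and the $k$th downward diagonal of the entries $(i,j)$ with $i-j \equiv k \pmod n$). A linear combination is called convex if the coefficients are nonnegative and their sum is equal to $1$. *)

(* Defs.v *)
From mathcomp Require Import all_boot all_order all_algebra perm.
From mathcomp Require Import reals.
Set Implicit Arguments. Unset Strict Implicit. Unset Printing Implicit Defensive.
Import Order.TTheory GRing.Theory Num.Theory.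
Local Open Scope ring_scope.

Definition doubly_stochastic {R : realType} (n : nat) (A : 'M[R]_n) : Prop :=
  (forall i j, 0 <= A i j) /\
  (forall i : 'I_n, \sum_(j < n) A i j = 1) /\
  (forall j : 'I_n, \sum_(i < n) A i j = 1).

(* k-th upward diagonal: entries (i,j) with i + j = k (mod n);
   k-th downward diagonal: entries (i,j) with i - j = k (mod n),
   written without subtraction as i = j + k (mod n). *)
Definition panstochastic {R : realType} (n : nat) (A : 'M[R]_n) : Prop :=
  doubly_stochastic A /\
  (forall k : 'I_n,
     \sum_(i < n) \sum_(j < n | ((i + j) %% n == nat_of_ord k)%N) A i j = 1) /\
  (forall k : 'I_n,
     \sum_(i < n) \sum_(j < n | (nat_of_ord i == (j + k) %% n)%N) A i j = 1).

Definition convex_comb_pan_perm {R : realType} (n : nat) (A : 'M[R]_n) : Prop :=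
  exists c : 'S_n -> R,
    (forall s, 0 <= c s) /\
    (forall s, c s != 0 -> panstochastic (perm_mx s : 'M[R]_n)) /\
    \sum_(s : 'S_n) c s = 1 /\
    A = \sum_(s : 'S_n) c s *: (perm_mx s : 'M[R]_n).

(* Main.v *)
Require Import Defs.
From mathcomp Require Import all_boot all_order all_algebra perm.
From mathcomp Require Import reals.
From mathcomp Require Import all_boot all_order all_algebra perm.
From mathcomp Require Import reals ring lra.
Set Implicit Arguments. Unset Strict Implicit. Unset Printing Implicit Defensive.
Import Order.TTheory GRing.Theory Num.Theory.
Local Open Scope ring_scope.

Definition o0 : 'I_5 := @Ordinal 5 0 isT.
Definition o1 : 'I_5 := @Ordinal 5 1 isT.
Definition o2 : 'I_5 := @Ordinal 5 2 isT.
Definition o3 : 'I_5 := @Ordinal 5 3 isT.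
Definition o4 : 'I_5 := @Ordinal 5 4 isT.
Definition oseq := [:: o0; o1; o2; o3; o4].
Definition oo (n : nat) : 'I_5 := nth o0 oseq n.
Definition f2 (u i : 'I_5) : 'I_5 := oo ((2 * i + u) %% 5).
Definition f3 (u i : 'I_5) : 'I_5 := oo ((3 * i + u) %% 5).
Definition g2 (i j : 'I_5) : 'I_5 := oo ((j + 3 * i) %% 5).
Definition g3 (i j : 'I_5) : 'I_5 := oo ((j + 2 * i) %% 5).

Lemma ordI (P : 'I_5 -> Prop) : P o0 -> P o1 -> P o2 -> P o3 -> P o4 -> forall i, P i.
Proof.
move=> H0 H1 H2 H3 H4 [m Hm].
case: m Hm => [|[|[|[|[|m]]]]] Hm //.
- by have -> : Ordinal Hm = o0 by apply: val_inj.
- by have -> : Ordinal Hm = o1 by apply: val_inj.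
- by have -> : Ordinal Hm = o2 by apply: val_inj.
- by have -> : Ordinal Hm = o3 by apply: val_inj.
- by have -> : Ordinal Hm = o4 by apply: val_inj.
Qed.

Lemma sum5P (R : realType) (P : pred 'I_5) (F : 'I_5 -> R) :
  \sum_(i < 5 | P i) F i = (if P o0 then F o0 else 0) + (if P o1 then F o1 else 0)
   + (if P o2 then F o2 else 0) + (if P o3 then F o3 else 0) + (if P o4 then F o4 else 0).
Proof.
rewrite big_mkcond !big_ord_recr big_ord0 /= add0r.
repeat f_equal; match goal with |- (if P ?x then _ else _) = (if P ?y then _ else _) => by have -> : x = y by apply: val_inj end.
Qed.

Definition ifb (T : Type) (b : bool) (x y : T) := if b then x else y.
Definition EA (R : realType) (A : 'M[R]_5) (n m : nat) := A (oo n) (oo m).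

Ltac normA A :=
  repeat match goal with
  | |- context [A ?x ?y] =>
      let n := eval vm_compute in (nat_of_ord x) in
      let m := eval vm_compute in (nat_of_ord y) in
      change (A x y) with (EA A n m)
  | |- context [@ifb ?R ?c ?t ?e] =>
      let c' := eval vm_compute in c in
      lazymatch c' with
      | true => change (@ifb R c t e) with t
      | false => change (@ifb R c t e) with e
      end
  end.

Definition S2 (R : realType) (A : 'M[R]_5) u := \sum_(i < 5) A i (f2 u i).
Definition S3 (R : realType) (A : 'M[R]_5) u := \sum_(i < 5) A i (f3 u i).

Lemma key (R : realType) (A : 'M[R]_5) : panstochastic A ->
  (forall i j, 5 * A i j = S2 A (g2 i j) + S3 A (g3 i j) - 1) /\
  \sum_(u < 5) S2 A u = 5 /\ \sum_(u < 5) S3 A u = 5.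
Proof.
case=> [[_ [Hr Hc]] [Hu Hd]].
have r0 := Hr o0; have r1 := Hr o1; have r2 := Hr o2; have r3 := Hr o3; have r4 := Hr o4.
have c0 := Hc o0; have c1 := Hc o1; have c2 := Hc o2; have c3 := Hc o3; have c4 := Hc o4.
have u0 := Hu o0; have u1 := Hu o1; have u2 := Hu o2; have u3 := Hu o3; have u4 := Hu o4.
have d0 := Hd o0; have d1 := Hd o1; have d2 := Hd o2; have d3 := Hd o3; have d4 := Hd o4.
clear Hr Hc Hu Hd.
move: r0 r1 r2 r3 r4 c0 c1 c2 c3 c4 u0 u1 u2 u3 u4 d0 d1 d2 d3 d4.
rewrite /S2 /S3 !sum5P /=. rewrite -/(ifb _ _ _).
split; last first.
  normA A. move=> *. split; lra.
apply: ordI; apply: ordI; rewrite !sum5P /=; normA A; move=> *; lra.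
Qed.


Definition h1 (u v : 'I_5) : 'I_5 := oo ((u + 4 * v) %% 5).
Definition h2 (u v : 'I_5) : 'I_5 := oo ((v + 3 * h1 u v) %% 5).
Definition allI (P : pred 'I_5) := all P oseq.
Lemma mem_oseq (i : 'I_5) : i \in oseq.
Proof. by case: i => [[|[|[|[|[|m]]]]] Hm]. Qed.
Lemma allIP (P : pred 'I_5) : allI P -> forall i, P i.
Proof. by move=> /allP H i; apply: H; rewrite mem_oseq. Qed.

Lemma f2_g2b : allI (fun u => allI (fun i => allI (fun j => (f2 u i == j) == (u == g2 i j)))).
Proof. by vm_compute. Qed.
Lemma f3_g3b : allI (fun u => allI (fun i => allI (fun j => (f3 u i == j) == (u == g3 i j)))).
Proof. by vm_compute. Qed.
Lemma f2_g2 u i j : (f2 u i == j) = (u == g2 i j).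
Proof. by move: (allIP f2_g2b u) => /allIP/(_ i)/allIP/(_ j)/eqP. Qed.
Lemma f3_g3 u i j : (f3 u i == j) = (u == g3 i j).
Proof. by move: (allIP f3_g3b u) => /allIP/(_ i)/allIP/(_ j)/eqP. Qed.
Lemma hb : allI (fun u => allI (fun v => (g2 (h1 u v) (h2 u v) == u) && (g3 (h1 u v) (h2 u v) == v))).
Proof. by vm_compute. Qed.
Lemma h_g2 u v : g2 (h1 u v) (h2 u v) = u.
Proof. by move: (allIP hb u) => /allIP/(_ v)/andP[/eqP]. Qed.
Lemma h_g3 u v : g3 (h1 u v) (h2 u v) = v.
Proof. by move: (allIP hb u) => /allIP/(_ v)/andP[_ /eqP]. Qed.

Lemma f2_injb : allI (fun u => allI (fun i => allI (fun i' => (f2 u i == f2 u i') ==> (i == i')))).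
Proof. by vm_compute. Qed.
Lemma f3_injb : allI (fun u => allI (fun i => allI (fun i' => (f3 u i == f3 u i') ==> (i == i')))).
Proof. by vm_compute. Qed.
Lemma f2_inj u : injective (f2 u).
Proof. by move=> i i' /eqP H; apply/eqP; move: (allIP f2_injb u) => /allIP/(_ i)/allIP/(_ i')/implyP; apply. Qed.
Lemma f3_inj u : injective (f3 u).
Proof. by move=> i i' /eqP H; apply/eqP; move: (allIP f3_injb u) => /allIP/(_ i)/allIP/(_ i')/implyP; apply. Qed.
Definition p2 u : 'S_5 := perm (@f2_inj u).
Definition p3 u : 'S_5 := perm (@f3_inj u).

Definition cnt_ok (f : 'I_5 -> 'I_5) :=
  allI (fun j => count (fun i => f i == j) oseq == 1%N) &&
  allI (fun k => count (fun i : 'I_5 => (i + f i) %% 5 == k)%N oseq == 1%N) &&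
  allI (fun k => count (fun i : 'I_5 => nat_of_ord i == (f i + k) %% 5)%N oseq == 1%N).
Lemma cnt2 : allI (fun u => cnt_ok (f2 u)).
Proof. by vm_compute. Qed.
Lemma cnt3 : allI (fun u => cnt_ok (f3 u)).
Proof. by vm_compute. Qed.

Section Gen.
Variable R : realType.

Lemma pick1 (T : finType) (p : T) (F : T -> R) : \sum_s (s == p)%:R * F s = F p.
Proof.
rewrite (bigD1 p) //= eqxx mul1r big1 ?addr0 // => s /negbTE ->; by rewrite mul0r.
Qed.

Lemma pick1r (T : finType) (p : T) (F : T -> R) : \sum_s F s * (s == p)%:R = F p.
Proof. by rewrite -[RHS](pick1 p); apply: eq_bigr => s _; rewrite mulrC. Qed.

Lemma inner (Q : pred 'I_5) (x : 'I_5) : \sum_(j < 5 | Q j) (x == j)%:R = (Q x)%:R :> R.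
Proof.
rewrite big_mkcond (bigD1 x) //= eqxx big1 ?addr0; first by case: (Q x).
by move=> j; rewrite eq_sym => /negbTE ->; case: (Q j).
Qed.

Lemma sumb (b : pred 'I_5) : \sum_(i < 5) (b i)%:R = (count b oseq)%:R :> R.
Proof.
by rewrite sum5P /= !natrD addr0 !addrA.
Qed.

Lemma pmxE (s : 'S_5) i j : (perm_mx s : 'M[R]_5) i j = (s i == j)%:R.
Proof. by rewrite /perm_mx !mxE. Qed.

Lemma pan_perm (s : 'S_5) (f : 'I_5 -> 'I_5) : s =1 f -> cnt_ok f ->
  panstochastic (perm_mx s : 'M[R]_5).
Proof.
move=> Hs /andP[/andP[/allIP Hc /allIP Hu] /allIP Hd].
split; [split; [|split]|split].
- by move=> i j; rewrite pmxE ler0n.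
- by move=> i; under eq_bigr do rewrite pmxE; rewrite (inner xpredT).
- move=> j; under eq_bigr do rewrite pmxE Hs; rewrite sumb.
  by rewrite (eqP (Hc j)).
- move=> k; under eq_bigr do (under eq_bigr do rewrite pmxE; rewrite inner Hs).
  by rewrite sumb (eqP (Hu k)).
- move=> k; under eq_bigr do (under eq_bigr do rewrite pmxE; rewrite inner Hs).
  by rewrite sumb (eqP (Hd k)).
Qed.

Lemma pan_p2 u : panstochastic (perm_mx (p2 u) : 'M[R]_5).
Proof. by apply: (pan_perm (f := f2 u)) => [i|]; [rewrite permE | apply: (allIP cnt2)]. Qed.
Lemma pan_p3 u : panstochastic (perm_mx (p3 u) : 'M[R]_5).
Proof. by apply: (pan_perm (f := f3 u)) => [i|]; [rewrite permE | apply: (allIP cnt3)]. Qed.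

End Gen.

Theorem theorem1p1 (R : realType) (A : 'M[R]_5) :
  panstochastic A <-> convex_comb_pan_perm A.
Proof.
split.
- move=> HP; have [K [S2s S3s]] := key HP.
  case: (@arg_minP _ _ _ o0 xpredT (S2 A)) => // u0 _ Hmin.
  pose m := S2 A u0.
  pose x u := (S2 A u - m) / 5.
  pose y v := (S3 A v - 1 + m) / 5.
  have xge0 u : 0 <= x u by rewrite /x divr_ge0 // subr_ge0; exact: Hmin.
  have yge0 v : 0 <= y v.
    rewrite /y /m; have := K (h1 u0 v) (h2 u0 v); rewrite h_g2 h_g3.
    have := (proj1 (proj1 HP)) (h1 u0 v) (h2 u0 v).
    move=> H1 H2; apply: divr_ge0 => //; lra.
  exists (fun s => \sum_u (s == p2 u)%:R * x u + \sum_v (s == p3 v)%:R * y v).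
  split; [|split; [|split]].
  + move=> s; apply: addr_ge0; apply: sumr_ge0 => u _; apply: mulr_ge0 => //; exact: ler0n.
  + move=> s; case: (pickP (fun u => s == p2 u)) => [u /eqP -> _|H2]; first exact: pan_p2.
    case: (pickP (fun u => s == p3 u)) => [u /eqP -> _|H3]; first exact: pan_p3.
    rewrite big1 ?big1 ?addr0 ?eqxx // => u _.
    * by rewrite H3 mul0r.
    * by rewrite H2 mul0r.
  + rewrite big_split /= exchange_big [X in _ + X]exchange_big /=.
    under eq_bigr => u _ do rewrite (@pick1 R _ (p2 u) (fun _ => x u)).
    under [X in _ + X]eq_bigr => u _ do rewrite (@pick1 R _ (p3 u) (fun _ => y u)).
    move: S2s S3s; rewrite /x /y !sum5P /=; move=> *; lra.
  + apply/matrixP => i j; rewrite summxE.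
    under eq_bigr do rewrite mxE pmxE mulrDl !mulr_suml.
    rewrite big_split /= exchange_big [X in _ + X]exchange_big /=.
    under eq_bigr => u _ do (under eq_bigr do rewrite -mulrA; rewrite pick1).
    under [X in _ + X]eq_bigr => u _ do (under eq_bigr do rewrite -mulrA; rewrite pick1).
    under eq_bigr do rewrite permE f2_g2.
    under [X in _ + X]eq_bigr do rewrite permE f3_g3.
    rewrite !pick1r /x /y.
    have := K i j; move=> *; lra.
- case=> c [Hc0 [Hcp [Hc1 HA]]].
  have Ae i j : A i j = \sum_s c s * (perm_mx s : 'M[R]_5) i j.
    by rewrite HA summxE; apply: eq_bigr => s _; rewrite mxE.
  have lin (L : 'M[R]_5 -> R) :
      (forall M : 'M[R]_5, panstochastic M -> L M = 1) ->
      \sum_s c s * L (perm_mx s) = 1.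
    move=> HL; rewrite -Hc1; apply: eq_bigr => s _.
    have [->|/Hcp/HL ->] := eqVneq (c s) 0; by rewrite ?mul0r ?mulr1.
  split; [split; [|split]|split].
  + move=> i j; rewrite Ae; apply: sumr_ge0 => s _; apply: mulr_ge0 => //.
    by rewrite pmxE ler0n.
  + move=> i; under eq_bigr do rewrite Ae.
    rewrite exchange_big /=.
    under eq_bigr do rewrite -mulr_sumr.
    by apply: (lin (fun M => \sum_(j < 5) M i j)) => M [[_ [HM _]] _].
  + move=> j; under eq_bigr do rewrite Ae.
    rewrite exchange_big /=.
    under eq_bigr do rewrite -mulr_sumr.
    by apply: (lin (fun M => \sum_(i < 5) M i j)) => M [[_ [_ HM]] _].
  + move=> k; under eq_bigr do (under eq_bigr do rewrite Ae; rewrite exchange_big /=).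
    rewrite exchange_big /=.
    under eq_bigr do (under eq_bigr do rewrite -mulr_sumr; rewrite -mulr_sumr).
    by apply: (lin (fun M => \sum_(i < 5) \sum_(j < 5 | ((i + j) %% 5 == k)%N) M i j)) => M [_ [HM _]].
  + move=> k; under eq_bigr do (under eq_bigr do rewrite Ae; rewrite exchange_big /=).
    rewrite exchange_big /=.
    under eq_bigr do (under eq_bigr do rewrite -mulr_sumr; rewrite -mulr_sumr).
    by apply: (lin (fun M => \sum_(i < 5) \sum_(j < 5 | (nat_of_ord i == (j + k) %% 5)%N) M i j)) => M [_ [_ HM]].
Qed.
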